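(* Let $T$ be an ergodic probability preserving transformation of a standard probability space $(X,\mathcal B,m)$, $G$ a locally compact second countable group, and $\varphi:X\to G$ measurable with $T_\varphi(x,g)=(Tx,\varphi(x)g)$ ergodic on $(X\times G,m\times m_G)$. Suppose $f(x,y)=f_0(x)\gamma(y)$, where $f_0:X\to\mathbb T$ is measurable and $\gamma:G\to\mathbb T$ is a continuous homomorphism, satisfies $f\circ T_\varphi=\lambda_0f$ a.e. for some $\lambda_0\in\mathbb T$. Then $\gamma\circ w=\gamma$ for all $w\in\mathcal E_\varphi$.
   Context: $m_G$ is left Haar measure. $\mathcal E_\varphi$ is the set of surjective continuous group endomorphisms $w$ of $G$ for which there exist a non-singular transformation $S$ of $X$ commuting with $T$ and a measurable $h:X\to G$ such that $Q(x,y)=(Sx,h(x)w(y))$ is a non-singular transformation of $X\times G$ commuting with $T_\varphi$. *)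

(* Defs.v *)
From HB Require Import structures.
From mathcomp Require Import all_boot all_order all_algebra.
From mathcomp Require Import all_classical all_reals all_analysis.
From mathcomp Require Import complex.
Set Implicit Arguments. Unset Strict Implicit. Unset Printing Implicit Defensive.
Import Order.TTheory GRing.Theory Num.Theory.
Local Open Scope classical_set_scope.
Local Open Scope ring_scope.

Notation Borel G := (g_sigma_algebraType (@open G)).

Definition is_lcsc_group (G : ptopologicalType)
    (mul : G -> G -> G) (inv : G -> G) (one : G) : Prop :=
  [/\ (forall a b c, mul a (mul b c) = mul (mul a b) c),
      (forall a, mul one a = a),
      (forall a, mul (inv a) a = one),
      (continuous (fun p : G * G => mul p.1 p.2) /\ continuous inv) &
      [/\ hausdorff_space G, locally_compact [set: G] & @second_countable G]].

Definition is_left_Haar (R : realType) (G : ptopologicalType)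
    (mul : G -> G -> G) (mG : set (Borel G) -> \bar R) : Prop :=
  [/\ (forall (g : G) (A : set (Borel G)), measurable A ->
         mG [set mul g y | y in A] = mG A),
      (forall K : set G, compact K -> (mG K < +oo)%E) &
      (forall U : set G, open U -> U !=set0 -> (0 < mG U)%E)].

(* Standard Borel space: Borel isomorphic to a Borel subset of the reals
   (Kuratowski's characterization). *)
Definition standard_borel d (X : measurableType d) (R : realType) : Prop :=
  exists e : X -> R, [/\ measurable_fun setT e, injective e,
     measurable (range e) &
     forall A : set X, measurable A -> measurable (e @` A)].

Definition measure_preserving d (X : measurableType d) (R : realType)
    (m : set X -> \bar R) (T : X -> X) : Prop :=
  measurable_fun setT T /\
  forall A : set X, measurable A -> m (T @^-1` A) = m A.

Definition ergodic d (X : measurableType d) (R : realType)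
    (m : set X -> \bar R) (T : X -> X) : Prop :=
  forall A : set X, measurable A -> T @^-1` A = A ->
    m A = 0%E \/ m (~` A) = 0%E.

Definition nonsingular d (X : measurableType d) (R : realType)
    (m : set X -> \bar R) (S : X -> X) : Prop :=
  measurable_fun setT S /\
  forall A : set X, measurable A -> (m (S @^-1` A) = 0%E <-> m A = 0%E).

Definition skew_product d (X : measurableType d) (G : ptopologicalType)
    (mul : G -> G -> G) (T : X -> X) (phi : X -> G) :
    X * Borel G -> X * Borel G :=
  fun p => (T p.1, (mul (phi p.1) p.2 : Borel G)).

Definition on_circle (R : realType) (z : R[i]) : Prop := `|z| = 1.

Definition measurable_C d (X : measurableType d) (R : realType)
    (f : X -> R[i]) : Prop :=
  measurable_fun setT (fun x => complex.Re (f x)) /\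
  measurable_fun setT (fun x => complex.Im (f x)).

Definition continuous_C (G : ptopologicalType) (R : realType)
    (f : G -> R[i]) : Prop :=
  continuous (fun x : G => (complex.Re (f x) : R^o)) /\
  continuous (fun x : G => (complex.Im (f x) : R^o)).

Definition E_phi d (X : measurableType d) (R : realType) (m : set X -> \bar R)
    (G : ptopologicalType) (mul : G -> G -> G) (mG : set (Borel G) -> \bar R)
    (T : X -> X) (phi : X -> G) (w : G -> G) : Prop :=
  [/\ continuous w, (forall a b, w (mul a b) = mul (w a) (w b)),
      (forall y : G, exists x : G, w x = y) &
      exists (S : X -> X) (h : X -> Borel G),
        [/\ nonsingular m S,
            {ae m, forall x, S (T x) = T (S x)},
            measurable_fun setT h &
            let Q := fun p : X * Borel G =>
                       (S p.1, (mul (h p.1) (w p.2) : Borel G)) in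
            (nonsingular (m \x mG)%E Q /\
            {ae (m \x mG)%E, forall p, Q (skew_product mul T phi p) =
                                       skew_product mul T phi (Q p)})]].

(* Main.v *)
Require Import Defs.
From HB Require Import structures.
From mathcomp Require Import all_boot all_order all_algebra.
From mathcomp Require Import all_classical all_reals all_analysis.
From mathcomp Require Import complex.
Import Order.TTheory GRing.Theory Num.Theory.
Local Open Scope classical_set_scope.
Local Open Scope ring_scope.

From mathcomp Require Import ring lra.

Section Erg.
Context d (P : measurableType d) (R : realType) (mu : {measure set P -> \bar R})
  (Tf : P -> P).
Hypothesis mTf : measurable_fun setT Tf.
Hypothesis nsTf : forall A, measurable A -> mu A = 0%E -> mu (Tf @^-1` A) = 0%E.
Hypothesis erg : ergodic mu Tf.

Lemma pre_meas (f : P -> P) A : measurable_fun setT f -> measurable A ->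
  measurable (f @^-1` A).
Proof. by move=> mf mA; rewrite -[_ @^-1` _]setTI; apply: mf. Qed.

Lemma iter_meas n : measurable_fun setT (iter n Tf).
Proof.
elim: n => [|n IH] /=; first exact: measurable_id.
exact: measurableT_comp.
Qed.

Lemma iter_ns n A : measurable A -> mu A = 0%E -> mu (iter n Tf @^-1` A) = 0%E.
Proof.
elim: n A => [|n IH] A mA A0 /=; first by [].
have -> : iter n.+1 Tf @^-1` A = Tf @^-1` (iter n Tf @^-1` A).
  by apply/seteqP; split => x; rewrite /preimage /= -iterS iterSr.
apply: nsTf; first exact: pre_meas (iter_meas n) mA.
exact: IH.
Qed.

Lemma inv_dichotomy (u : P -> R) : measurable_fun setT u ->
  mu.-negligible [set p | u (Tf p) != u p] -> forall r : R,
  mu.-negligible [set p | u p < r] \/ mu.-negligible [set p | ~ (u p < r)].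
Proof.
move=> mu_ [N0 [mN0 N00 sN0]] r.
set E := [set p | u p < r].
have mE : measurable E.
  have := mu_ measurableT _ (measurable_itv `]-oo, r[).
  by rewrite setTI /E; congr measurable; apply/seteqP; split => x /=;
    rewrite in_itv.
set Z := \bigcup_n (iter n Tf @^-1` N0).
have negZ : mu.-negligible Z.
  apply: negligible_bigcup => n; exists (iter n Tf @^-1` N0); split => //.
  - exact: pre_meas (iter_meas n) mN0.
  - exact: iter_ns.
have offZ p : ~ Z p -> forall n, u (iter n Tf p) = u p.
  move=> Zp; elim=> [//|n IH]; rewrite iterS.
  apply/eqP; rewrite -IH; apply/negP => /negP h; apply: Zp; exists n => //.
  exact: sN0.
set A := \bigcup_N \bigcap_k (iter (k + N) Tf @^-1` E).
have mA : measurable A.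
  apply: bigcupT_measurable => N; apply: bigcapT_measurable => k.
  exact: pre_meas (iter_meas _) mE.
have invA : Tf @^-1` A = A.
  apply/seteqP; split => p /=.
  - move=> [N _ HN]; exists N.+1 => // k _; rewrite /= addnS iterSr.
    exact: (HN k).
  - move=> [N _ HN]; exists N => // k _; rewrite /= -iterSr -addSn.
    exact: (HN k.+1).
have [A0|cA0] := erg _ mA invA.
- left; apply: (@negligibleS _ _ _ _ (A `|` Z)); last first.
    by apply: negligibleU => //; exists A; split.
  move=> p Ep; have [Zp|Zp] := pselect (Z p); first by right.
  left; exists 0%N => // k _ /=; rewrite addn0 /E /= offZ //.
- right; apply: (@negligibleS _ _ _ _ (~` A `|` Z)); last first.
    apply: negligibleU => //; exists (~` A); split => //.
    exact: measurableC.
  move=> p Ep; have [Zp|Zp] := pselect (Z p); first by right.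
  left => -[N _ HN]; apply: Ep; have := HN 0%N I; rewrite /= add0n /E /=.
  by rewrite offZ.
Qed.

Lemma inv_const (u : P -> R) : measurable_fun setT u ->
  mu.-negligible [set p | u (Tf p) != u p] ->
  (forall p, `|u p| <= 1) ->
  exists c, mu.-negligible [set p | u p != c].
Proof.
move=> mu_ inv bnd.
have [T0|T0] := pselect (mu.-negligible setT).
  by exists 0; apply: negligibleS T0.
pose S := [set r : R | mu.-negligible [set p | u p < r]].
have Sdown r s : r <= s -> S s -> S r.
  move=> rs; apply: negligibleS => p /= h; exact: lt_le_trans rs.
have S2 : S (-2).
  apply: negligibleS (negligible_set0 mu) => p /=.
  have := bnd p; rewrite ler_norml => /andP[h _] h'.
  have : -2 < -1 :> R by rewrite ltrN2 ltr1n.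
  move=> h2; have := lt_trans h' h2; rewrite ltNge h //.
have Sub : ubound S 2.
  move=> s Ss; rewrite leNgt; apply/negP => s2; apply: T0.
  apply: negligibleS Ss => p _ /=.
  have := bnd p; rewrite ler_norml => /andP[_ h].
  apply: le_lt_trans h _; apply: lt_trans s2; rewrite ltr1n //.
have hS : has_sup S by split; [exists (-2)|exists 2].
exists (sup S).
have -> : [set p | u p != sup S] =
  (\bigcup_n [set p | u p < sup S - n.+1%:R^-1]) `|`
  (\bigcup_n [set p | ~ (u p < sup S + n.+1%:R^-1)]).
  apply/seteqP; split => p /=.
  - rewrite neq_lt => /orP[h|h].
    + left; have [k hk] := ltr_add_invr h.
      exists k => //=; rewrite ltrBrDr //.
    + right; have [k hk] := ltr_add_invr h.
      by exists k => //=; apply/negP; rewrite -leNgt ltW.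
  - move=> [[k _ /= h]|[k _ /= h]]; rewrite neq_lt.
      apply/orP; left; apply: lt_le_trans h _; rewrite lerBlDr lerDl //.
    apply/orP; right; move: h => /negP; rewrite -leNgt => h.
    by apply: lt_le_trans h; rewrite ltrDl invr_gt0 ltr0n.
apply: negligibleU; apply: negligible_bigcup => k.
- have [s Ss hs] := @sup_adherent _ S (k.+1%:R^-1) ltac:(by rewrite invr_gt0 ltr0n) hS.
  exact: Sdown (ltW hs) Ss.
- have [h|//] := @inv_dichotomy u mu_ inv (sup S + k.+1%:R^-1).
  have := sup_upper_bound hS h; rewrite leNgt => /negP; elim.
  by rewrite ltrDl invr_gt0 ltr0n.
Qed.

End Erg.
Arguments pre_meas {d P f A}.

Section Grp.
Context (G : ptopologicalType) (mul : G -> G -> G) (inv : G -> G) (one : G).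
Hypothesis hG : is_lcsc_group mul inv one.

Lemma mulA a b c : mul a (mul b c) = mul (mul a b) c.
Proof. by case: hG. Qed.
Lemma mul1 a : mul one a = a.
Proof. by case: hG. Qed.
Lemma mulV a : mul (inv a) a = one.
Proof. by case: hG. Qed.
Lemma mulVr a : mul a (inv a) = one.
Proof.
rewrite -[mul a (inv a)]mul1 -[X in mul X _](mulV (inv a)) -mulA.
by rewrite [mul (inv a) (mul a _)]mulA mulV mul1 mulV.
Qed.

Lemma preimage_mul a (S : set G) :
  (mul a) @^-1` S = [set mul (inv a) z | z in S].
Proof.
apply/seteqP; split => y /=.
  by move=> Sy; exists (mul a y) => //; rewrite mulA mulV mul1.
by move=> [z Sz <-]; rewrite mulA mulVr mul1.
Qed.

Lemma open_meas (U : set G) : open U -> measurable (U : set (Borel G)).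
Proof. by move=> oU; apply: sub_sigma_algebra. Qed.

Lemma closed_meas (U : set G) : closed U -> measurable (U : set (Borel G)).
Proof.
move=> cU; rewrite -[U]setCK; apply: measurableC; apply: open_meas.
by rewrite openC.
Qed.

Lemma enum_basis : exists g : nat -> set G,
  forall (x : G) (N : set G), nbhs x N ->
    exists i, [/\ open (g i), g i x & g i `<=` N].
Proof.
have [_ _ _ _ [_ _ [B cB [Bo Bb]]]] := hG.
have [g sg] := pcard_surjP cB.
exists g => x N xN.
have [U [BU Ux] UN] := Bb x N xN.
have [i _ gi] := sg U BU.
by exists i; rewrite gi; split => //; exact: Bo.
Qed.

Lemma Haar_sigma_finite (R : realType) (mG : {measure set (Borel G) -> \bar R}) :
  is_left_Haar mul mG -> sigma_finite setT mG.
Proof.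
move=> [_ Hfin _].
have [_ _ _ _ [_ lc _]] := hG.
have [g hg] := enum_basis.
pose C i := open (g i) /\ exists K, [/\ compact K, closed K & g i `<=` K].
exists (fun i => if pselect (C i) then (g i : set (Borel G)) else set0).
  apply/seteqP; split => x // _.
  have [K xK [cK clK]] := lc x I.
  have xK' : nbhs x K.
    move: xK; rewrite /within /=.
    by apply: (@filterS _ (nbhs x)) => y; apply.
  have [i [oi xi iK]] := hg x K xK'.
  exists i => //; case: (pselect (C i)) => [//|nC]; exfalso; apply: nC.
  by split => //; exists K.
move=> i; destruct (pselect (C i)) as [[oi [K [cK clK iK]]]|nC]; last first.
  by split; [exact: measurable0|rewrite measure0].
split; first exact: open_meas.
apply: le_lt_trans (Hfin K cK).
apply: le_measure; rewrite ?inE //; [exact: open_meas|exact: closed_meas].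
Qed.


Lemma skew_meas d (X : measurableType d) (T : X -> X) (phi : X -> Borel G) :
  measurable_fun setT T -> measurable_fun setT phi ->
  measurable_fun setT (skew_product mul T phi).
Proof.
move=> mT mphi; apply/measurable_fun_pairP; split.
  exact: (measurableT_comp mT measurable_fst).
have [_ _ _ [hmul _] _] := hG.
apply: (@measurability _ _ _ (Borel G) setT _ (@open G) erefl).
move=> _ [Op oO <-].
set W := [set q : G * G | Op (mul q.1 q.2)].
have oW : open W.
  by apply: (@open_comp _ _ (fun q : G * G => mul q.1 q.2)) => // q _; exact: hmul.
have [g hg] := enum_basis.
pose C i j := [/\ open (g i), open (g j) & g i `*` g j `<=` W].
pose F i j : set (X * Borel G) :=
  if pselect (C i j) then (phi @^-1` g i) `*` (g j : set (Borel G)) else set0.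
have -> : [set: X * Borel G] `&` (snd \o skew_product mul T phi) @^-1` Op =
    \bigcup_i \bigcup_j F i j.
  apply/seteqP; split => -[x y] /=.
  - move=> [_ Oxy].
    have : nbhs ((phi x, y) : G * G) W by rewrite openE in oW; exact: oW.
    case=> -[P1 P2] [/= n1 n2] sub.
    have [i [oi xi iP]] := hg _ _ n1.
    have [j [oj yj jP]] := hg _ _ n2.
    exists i => //; exists j => //; rewrite /F.
    destruct (pselect (C i j)) as [c|nC]; first by split.
    exfalso; apply: nC; split => // -[a b] [/= ai bj]; apply: sub; split.
    + exact: iP.
    + exact: jP.
  - move=> [i _ [j _]]; rewrite /F.
    destruct (pselect (C i j)) as [[c1 c2 sub]|nc] => // -[/= xi yj].
    split => //; exact: (sub (phi x, y)).
apply: bigcupT_measurable => i; apply: bigcupT_measurable => j; rewrite /F.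
destruct (pselect (C i j)) as [[oi oj c3]|nc]; last exact: measurable0.
apply: measurableX; last exact: open_meas.
rewrite -[_ @^-1` _]setTI; apply: mphi => //; exact: open_meas.
Qed.

End Grp.

Section Prod.
Context (R : realType) d (X : measurableType d) (m : {measure set X -> \bar R})
  (G : ptopologicalType) (mul : G -> G -> G) (inv : G -> G) (one : G)
  (mG : {sigma_finite_measure set (Borel G) -> \bar R}).
Hypothesis hG : is_lcsc_group mul inv one.
Hypothesis hH : is_left_Haar mul mG.

Lemma mulVr' a : mul a (inv a) = one.
Proof.
have [A L V _ _] := hG.
rewrite -[mul a (inv a)]L -[X in mul X _](V (inv a)) -A.
by rewrite [mul (inv a) (mul a _)]A V L V.
Qed.

Lemma skew_ns (T : X -> X) (phi : X -> Borel G) :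
  measure_preserving m T ->
  forall A, measurable A -> (m \x mG)%E A = 0%E ->
  (m \x mG)%E (skew_product mul T phi @^-1` A) = 0%E.
Proof.
move=> [mT pT] A mA A0.
have [Hinv _ _] := hH.
have [hA hL hV _ _] := hG.
rewrite /product_measure1.
transitivity (\int[m]_x ((mG \o xsection A) \o T) x)%E.
  apply: eq_integral => x _ /=.
  have -> : xsection (skew_product mul T phi @^-1` A) x =
      [set mul (inv (phi x)) z | z in xsection A (T x)].
    apply/seteqP; split => y; rewrite /xsection /= inE.
      move=> Ay; exists (mul (phi x) y); first by rewrite inE.
      by rewrite hA hV hL.
    move=> [z]; rewrite inE => Az <-.
    by rewrite /skew_product /= hA mulVr' hL.
  by rewrite Hinv //; apply: measurable_xsection.
have mf := measurable_fun_xsection mG mA.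
transitivity (\int[m]_(x in T @^-1` setT) ((mG \o xsection A) \o T) x)%E.
  by rewrite preimage_setT.
rewrite -ge0_integral_pushforward //.
transitivity (\int[m]_x (mG \o xsection A) x)%E; last exact: A0.
apply: eq_measure_integral => B mB _ /=.
exact: pT.
Qed.

Lemma null_section (N : set (X * Borel G)) :
  measurable N -> (m \x mG)%E N = 0%E -> (m setT != 0)%E ->
  exists x, mG (xsection N x) = 0%E.
Proof.
move=> mN N0 mT0.
have mf := measurable_fun_xsection mG mN.
have := (ae_eq_integral_abs m measurableT mf).1.
rewrite /product_measure1 in N0.
have -> : (\int[m]_x `|(mG \o xsection N) x| = \int[m]_x (mG \o xsection N) x)%E.
  by apply: eq_integral => x _; rewrite gee0_abs //; exact: measure_ge0.
move=> /(_ N0) [M [mM M0 sM]].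
apply: contrapT => hx; move: mT0; rewrite -M0 => /negP; apply.
rewrite (_ : setT = M) //; apply/seteqP; split => // x _; apply: sM => /= h.
by apply: hx; exists x; apply: h.
Qed.

End Prod.

Section Cpx.
Import numFieldNormedType.Exports.
Context (R : realType).

Lemma ReM (a b : R[i]) : complex.Re (a * b) =
  complex.Re a * complex.Re b - complex.Im a * complex.Im b.
Proof. by case: a => ? ?; case: b => ? ?. Qed.
Lemma ImM (a b : R[i]) : complex.Im (a * b) =
  complex.Re a * complex.Im b + complex.Im a * complex.Re b.
Proof. by case: a => ? ?; case: b => ? ?. Qed.
Lemma ReJ (a : R[i]) : complex.Re (a^*) = complex.Re a.
Proof. by case: a. Qed.
Lemma ImJ (a : R[i]) : complex.Im (a^*) = - complex.Im a.
Proof. by case: a. Qed.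

Section CC.
Context (G : ptopologicalType).
Implicit Types f g : G -> R[i].

Lemma cC_mul f g : continuous_C f -> continuous_C g ->
  continuous_C (fun y => f y * g y).
Proof.
move=> [fr fi] [gr gi]; split => y.
- have -> : (fun y => (complex.Re (f y * g y) : R^o)) =
    ((fun y => complex.Re (f y) : R^o) \* (fun y => complex.Re (g y) : R^o)) -
    ((fun y => complex.Im (f y) : R^o) \* (fun y => complex.Im (g y) : R^o)).
    by rewrite funeqE => z /=; rewrite ReM.
  by apply: continuousB; apply: continuousM; [exact: fr|exact: gr|exact: fi|exact: gi].
- have -> : (fun y => (complex.Im (f y * g y) : R^o)) =
    ((fun y => complex.Re (f y) : R^o) \* (fun y => complex.Im (g y) : R^o)) +
    ((fun y => complex.Im (f y) : R^o) \* (fun y => complex.Re (g y) : R^o)).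
    by rewrite funeqE => z /=; rewrite ImM.
  by apply: continuousD; apply: continuousM; [exact: fr|exact: gi|exact: fi|exact: gr].
Qed.

Lemma cC_conj f : continuous_C f -> continuous_C (fun y => (f y)^*).
Proof.
move=> [fr fi]; split => y.
- have -> : (fun y => (complex.Re ((f y)^*) : R^o)) = (fun y => complex.Re (f y)).
    by rewrite funeqE => z /=; rewrite ReJ.
  exact: fr.
- have -> : (fun y => (complex.Im ((f y)^*) : R^o)) = (fun y => - complex.Im (f y)).
    by rewrite funeqE => z /=; rewrite ImJ.
  by apply: continuousN; exact: fi.
Qed.

Lemma cC_cst (k : R[i]) : continuous_C (fun _ : G => k).
Proof. by split => y; apply: cvg_cst. Qed.

Lemma cC_comp (w : G -> G) f : continuous w -> continuous_C f ->
  continuous_C (fun y => f (w y)).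
Proof.
move=> cw [fr fi]; split => y.
- exact: (continuous_comp (cw y) (fr (w y))).
- exact: (continuous_comp (cw y) (fi (w y))).
Qed.

Lemma cC_open f (c : R[i]) : continuous_C f -> open [set y | f y != c].
Proof.
move=> [/continuousP fr /continuousP fi].
have -> : [set y | f y != c] =
  ((fun y => complex.Re (f y) : R^o) @^-1` [set r | r != complex.Re c]) `|`
  ((fun y => complex.Im (f y) : R^o) @^-1` [set r | r != complex.Im c]).
  apply/seteqP; split => y /=.
  - move: (f y) c => [a b] [a1 b1] /=.
    by rewrite eq_complex negb_and => /orP[h|h]; [left|right].
  - move: (f y) c => [a b] [a1 b1] /= [] /eqP h; apply/eqP => -[e1 e2]; [exact: h e1|exact: h e2].
apply: openU; [apply: fr|apply: fi]; exact: open_neq.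
Qed.

End CC.

Lemma cont_meas (G : ptopologicalType) (k : G -> R) :
  continuous (k : G -> R^o) -> measurable_fun setT (k : Borel G -> R).
Proof.
move=> /continuousP ck; apply: (measurability _ (measurable_realfun.RGenOpens.measurableE R)).
move=> _ [_ [a [b ->]] <-]; rewrite setTI; apply: sub_sigma_algebra.
exact/ck/interval_open.
Qed.

Lemma cC_meas (G : ptopologicalType) (f : G -> R[i]) :
  continuous_C f -> measurable_C (f : Borel G -> R[i]).
Proof. by move=> [fr fi]; split; apply: cont_meas. Qed.

Section MC.
Context d (T : measurableType d).
Implicit Types f g : T -> R[i].

Lemma mC_mul f g : measurable_C f -> measurable_C g ->
  measurable_C (fun y => f y * g y).
Proof.
move=> [fr fi] [gr gi]; split.
- have -> : (fun y => complex.Re (f y * g y)) =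
    ((fun y => complex.Re (f y)) \* (fun y => complex.Re (g y))) \-
    ((fun y => complex.Im (f y)) \* (fun y => complex.Im (g y))).
    by rewrite funeqE => z /=; rewrite ReM.
  by apply: measurable_realfun.measurable_funB; apply: measurable_realfun.measurable_funM.
- have -> : (fun y => complex.Im (f y * g y)) =
    ((fun y => complex.Re (f y)) \* (fun y => complex.Im (g y))) \+
    ((fun y => complex.Im (f y)) \* (fun y => complex.Re (g y))).
    by rewrite funeqE => z /=; rewrite ImM.
  by apply: measurable_realfun.measurable_funD; apply: measurable_realfun.measurable_funM.
Qed.

Lemma mC_conj f : measurable_C f -> measurable_C (fun y => (f y)^*).
Proof.
move=> [fr fi]; split.
- have -> : (fun y => complex.Re ((f y)^*)) = (fun y => complex.Re (f y)).
    by rewrite funeqE => z; rewrite ReJ.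
  exact: fr.
- have -> : (fun y => complex.Im ((f y)^*)) = (fun y => - complex.Im (f y)).
    by rewrite funeqE => z; rewrite ImJ.
  exact: (measurable_realfun.measurable_funN fi).
Qed.

Lemma mC_comp d' (U : measurableType d') (h : U -> T) f :
  measurable_fun setT h -> measurable_C f -> measurable_C (fun y => f (h y)).
Proof.
by move=> mh [fr fi]; split; [exact: (measurableT_comp fr mh)|exact: (measurableT_comp fi mh)].
Qed.

End MC.

Lemma circ_mul (a b : R[i]) : on_circle a -> on_circle b -> on_circle (a * b).
Proof. by rewrite /on_circle normrM => -> ->; rewrite mulr1. Qed.
Lemma circ_conj (a : R[i]) : on_circle a -> on_circle (a^*).
Proof. by rewrite /on_circle norm_conjC. Qed.
Lemma circ_inv (a : R[i]) : on_circle a -> a * a^* = 1.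
Proof. by rewrite /on_circle -normCK => ->; rewrite expr1n. Qed.
Lemma circ_Re (a : R[i]) : on_circle a ->
  `|complex.Re a| <= 1 /\ `|complex.Im a| <= 1.
Proof.
move=> /circ_inv; case: a => x y /= [h _].
by rewrite !ler_norml; split; apply/andP; split; nra.
Qed.

End Cpx.
Arguments ReM {R}.
Arguments ImM {R}.
Arguments ReJ {R}.
Arguments ImJ {R}.
Arguments cC_mul {R G f g}.
Arguments cC_conj {R G f}.
Arguments cC_cst {R G}.
Arguments cC_comp {R G w f}.
Arguments cC_open {R G f} c.
Arguments cont_meas {R G k}.
Arguments cC_meas {R G f}.
Arguments mC_mul {R d T f g}.
Arguments mC_conj {R d T f}.
Arguments mC_comp {R d T d' U h f}.
Arguments circ_mul {R a b}.
Arguments circ_conj {R a}.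
Arguments circ_inv {R a}.
Arguments circ_Re {R a}.

Theorem lemma2p3 (R : realType) (d : measure_display) (X : measurableType d)
  (m : probability X R) (T : X -> X)
  (G : ptopologicalType) (mul : G -> G -> G) (inv : G -> G) (one : G)
  (mG : {measure set (Borel G) -> \bar R}) (phi : X -> Borel G)
  (f0 : X -> R[i]) (gamma : G -> R[i]) (lambda0 : R[i]) :
  standard_borel X R ->
  measure_preserving m T -> ergodic m T ->
  is_lcsc_group mul inv one -> is_left_Haar mul mG ->
  measurable_fun setT phi ->
  ergodic (m \x mG)%E (skew_product mul T phi) ->
  measurable_C f0 -> (forall x, on_circle (f0 x)) ->
  continuous_C gamma -> (forall g, on_circle (gamma g)) ->
  (forall a b, gamma (mul a b) = gamma a * gamma b) ->
  on_circle lambda0 ->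
  {ae (m \x mG)%E, forall p : (X * Borel G)%type,
     f0 (skew_product mul T phi p).1 * gamma (skew_product mul T phi p).2 =
     lambda0 * (f0 p.1 * gamma p.2)} ->
  forall w : G -> G, E_phi m mul mG T phi w -> forall g : G, gamma (w g) = gamma g.
Proof.
move=> _ mpT _ hG hH mphi ergS mf0 cf0 cgam gcirc hom clam H w
  [cw hw _ [S [h [nsS _ mh HQ]]]] g.
pose Q := fun p : X * Borel G => (S p.1, (mul (h p.1) (w p.2) : Borel G)).
have [nsQ commQ] : nonsingular (m \x mG)%E Q /\
   {ae (m \x mG)%E, forall p, Q (skew_product mul T phi p) =
                              skew_product mul T phi (Q p)} := HQ.
have sfG := @Haar_sigma_finite G mul inv one hG R mG hH.
pose H2 := @isSFinite.Build _ _ _ (Measure.sort mG)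
  (sfinite_measure_sigma_finite sfG).
pose H3 := @isSigmaFinite.Build _ _ _ (Measure.sort mG) sfG.
pose mG' := HB.pack_for (SigmaFiniteMeasure.type (Borel G) R) (Measure.sort mG) H2 H3.
pose mu := (m \x mG')%E.
pose Tp := skew_product mul T phi.
have mT := mpT.1.
have mTp : measurable_fun setT Tp := @skew_meas G mul inv one hG d X T phi mT mphi.
have hH' : is_left_Haar mul mG' := hH.
have nsTp : forall A, measurable A -> mu A = 0%E -> mu (Tp @^-1` A) = 0%E.
  exact: (@skew_ns R d X m G mul inv one mG' hG hH' T phi mpT).
have ergS' : ergodic mu Tp := ergS.
pose f := fun p : X * Borel G => f0 p.1 * gamma p.2.
pose F := fun p => f (Q p) * (f p)^*.
have mQ : measurable_fun setT Q := nsQ.1.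
have mf : measurable_C f.
  rewrite /f; apply: (@mC_mul R _ _ (fun p : X * Borel G => f0 p.1)
                             (fun p : X * Borel G => gamma p.2)).
    exact: (@mC_comp R _ X _ _ fst f0 measurable_fst mf0).
  exact: (@mC_comp R _ (Borel G) _ _ snd gamma measurable_snd (cC_meas cgam)).
have mF : measurable_C F.
  rewrite /F; apply: (@mC_mul R _ _ (fun p => f (Q p)) (fun p => (f p)^*)).
    exact: (@mC_comp R _ _ _ _ Q f mQ mf).
  exact: mC_conj.
have fcirc p : on_circle (f p) by apply: circ_mul.
have Fcirc p : on_circle (F p) by apply: circ_mul => //; exact: circ_conj.
have invF : mu.-negligible [set p | F (Tp p) != F p].
  have [N1 [mN1 N10 sN1]] := H.
  have [N2 [mN2 N20 sN2]] := commQ.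
  have mN3 : measurable (Q @^-1` N1) := pre_meas mQ mN1.
  have N30 : (m \x mG)%E (Q @^-1` N1) = 0%E by apply/(nsQ.2 N1 mN1).
  have ng1 : mu.-negligible N1 by exists N1; split.
  have ng2 : mu.-negligible N2 by exists N2; split.
  have ng3 : mu.-negligible (Q @^-1` N1) by exists (Q @^-1` N1); split.
  apply: (negligibleS _ (negligibleU (negligibleU ng1 ng2) ng3)).
  move=> p /= /eqP hne; apply: contrapT => nU; apply: hne.
  have e1 : f (Tp p) = lambda0 * f p.
    by apply: contrapT => hc; apply: nU; left; left; apply: sN1.
  have e2 : Q (Tp p) = Tp (Q p).
    by apply: contrapT => hc; apply: nU; left; right; apply: sN2.
  have e3 : f (Tp (Q p)) = lambda0 * f (Q p).
    by apply: contrapT => hc; apply: nU; right; apply: sN1.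
  by rewrite /F e2 e3 e1 !rmorphM mulrACA circ_inv // mul1r.
pose u := fun p => complex.Re (F p).
pose v := fun p => complex.Im (F p).
have inv_u : mu.-negligible [set p | u (Tp p) != u p].
  apply: negligibleS invF => p /=; apply: contra_neq; rewrite /u => ->.
  by [].
have inv_v : mu.-negligible [set p | v (Tp p) != v p].
  apply: negligibleS invF => p /=; apply: contra_neq; rewrite /v => ->.
  by [].
have [c1 hc1] := @inv_const _ _ R mu Tp mTp nsTp ergS' u mF.1 inv_u
  (fun p => (circ_Re (Fcirc p)).1).
have [c2 hc2] := @inv_const _ _ R mu Tp mTp nsTp ergS' v mF.2 inv_v
  (fun p => (circ_Re (Fcirc p)).2).
have [M [mM M0 sM]] := negligibleU hc1 hc2.
have mT0 : (m setT != 0)%E by rewrite probability_setT eqe oner_eq0.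
have [x Mx0] := @null_section R d X m G mG' M mM M0 mT0.
pose K := f0 (S x) * gamma (h x) * (f0 x)^*.
pose chi := fun y => gamma (w y) * (gamma y)^*.
have Fxy y : F (x, y) = K * chi y.
  rewrite /F /f /Q /K /chi /= hom !rmorphM; ring.
have cchi : continuous_C (fun y => K * chi y).
  apply: cC_mul; first exact: cC_cst.
  apply: cC_mul; first exact: cC_comp.
  exact: cC_conj.
pose c := Complex c1 c2.
have oU := cC_open c cchi.
have U0 : [set y | K * chi y != c] = set0.
  apply: contrapT => /eqP/set0P hne.
  have [_ _ Hpos] := hH.
  have := Hpos _ oU hne.
  have : (mG [set y | (K * chi y != c)%R] <= mG (xsection M x))%E.
    apply: le_measure; rewrite ?inE.
    - exact: open_meas.
    - exact: measurable_xsection.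
    move=> y /= hy; rewrite /xsection /= inE; apply: contrapT => nM.
    move: hy; rewrite -Fxy => /eqP; apply.
    have e1 : u (x, y) = c1 by apply: contrapT => hc; apply: nM; apply: sM; left; exact/eqP.
    have e2 : v (x, y) = c2 by apply: contrapT => hc; apply: nM; apply: sM; right; exact/eqP.
    rewrite /c -e1 -e2 /u /v; by case: (F (x, y)).
  have -> : (mG (xsection M x) = 0)%E := Mx0.
  by move=> h1 h2; move: (lt_le_trans h2 h1); rewrite ltxx.
have Kc y : K * chi y = c.
  apply/eqP; apply: contrapT => hc.
  have : [set y | K * chi y != c] y by apply/negP.
  by rewrite U0.
have nz (z : R[i]) : on_circle z -> z != 0.
  by rewrite /on_circle => hz; rewrite -normr_eq0 hz oner_eq0.
have idem (z : R[i]) : on_circle z -> z = z * z -> z = 1.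
  move=> hz e; apply: (mulfI (nz _ hz)); by rewrite mulr1 -e.
have g1 : gamma one = 1.
  by apply: idem => //; rewrite -hom (@mul1 G mul inv one hG).
have gw1 : gamma (w one) = 1.
  by apply: idem => //; rewrite -hom -hw (@mul1 G mul inv one hG).
have chi1 : chi one = 1 by rewrite /chi g1 gw1 rmorph1 mulr1.
have Kc' : K = c by rewrite -(Kc one) chi1 mulr1.
have Kcirc : on_circle K.
  by apply: circ_mul; [apply: circ_mul|apply: circ_conj].
have chig : chi g = 1.
  apply: (mulfI (nz _ Kcirc)); by rewrite mulr1 Kc Kc'.
move: chig; rewrite /chi => e.
have := circ_inv (gcirc g) => ei.
by rewrite -[RHS]mul1r -e -mulrA [_^* * _]mulrC ei mulr1.
Qed.
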